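(* Let $F$ be a minimally unsatisfiable clause-set and $v\neq w$ two non-1-singular variables for $F$. Let $C$ be the main clause for $v$ and $D$ the main clause for $w$. 1. If $C = D$, then $w$ is not singular for $\mathrm{DP}_v(F)$ and $v$ is not singular for $\mathrm{DP}_w(F)$. 2. If $C\neq D$, then $w$ is non-1-singular for $\mathrm{DP}_v(F)$ and $v$ is non-1-singular for $\mathrm{DP}_w(F)$.
   Context: Literals are variables $v$ and complements $\overline{v}$; a clause is a finite set of literals with no complementary pair; a clause-set is a finite set of clauses; $\mathrm{ldeg}_F(x)$ is the number of clauses of $F$ containing literal $x$. $\mathrm{DP}_v(F) := \{C \in F : v \notin \mathrm{var}(C)\} \cup \{(C \cup D)\setminus\{v,\overline{v}\} : C, D \in F,\ C \cap \overline{D} = \{v\}\}$. A variable $v$ is singular for $F$ if $\min(\mathrm{ldeg}_F(v),\mathrm{ldeg}_F(\overline{v}))=1$; it is 1-singular if $\mathrm{ldeg}_F(v)=\mathrm{ldeg}_F(\overline{v})=1$, and non-1-singular if it is singular but not 1-singular. For a non-1-singular variable $v$ the singular literal is the unique literal $x$ with underlying variable $v$ and $\mathrm{ldeg}_F(x)=1$, and the main clause is the unique clause of $F$ containing $x$. *)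

(* Defs.v *)
From HB Require Import structures.
From mathcomp Require Import all_boot.
From mathcomp Require Import finmap.

Set Implicit Arguments.
Unset Strict Implicit.
Unset Printing Implicit Defensive.

Local Open Scope fset_scope.

Section ClauseSets.
Variable V : choiceType.

(* A literal is a pair (variable, sign): (v, true) is the positive literal v,
   (v, false) is the complement \overline{v}. *)
Definition lit := (V * bool)%type.
Definition lvar (x : lit) : V := x.1.
Definition compl (x : lit) : lit := (x.1, ~~ x.2).
Definition poslit (v : V) : lit := (v, true).
Definition neglit (v : V) : lit := (v, false).

Definition is_clause (C : {fset lit}) : bool :=
  [forall x : C, compl (val x) \notin C].
Definition is_clause_set (F : {fset {fset lit}}) : Prop :=
  forall C, C \in F -> is_clause C.

Definition cvar (C : {fset lit}) : {fset V} := [fset lvar x | x in C].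
Definition ccompl (C : {fset lit}) : {fset lit} := [fset compl x | x in C].

Definition sat_lit (phi : V -> bool) (x : lit) : bool := phi x.1 == x.2.
Definition sat_clause (phi : V -> bool) (C : {fset lit}) : bool :=
  [exists x : C, sat_lit phi (val x)].
Definition satisfiable (F : {fset {fset lit}}) : Prop :=
  exists phi : V -> bool, forall C, C \in F -> sat_clause phi C.

Definition MU (F : {fset {fset lit}}) : Prop :=
  ~ satisfiable F /\ forall G, G `<` F -> satisfiable G.

Definition ldeg (F : {fset {fset lit}}) (x : lit) : nat :=
  #|` [fset C in F | x \in C] |.

Definition DP (v : V) (F : {fset {fset lit}}) : {fset {fset lit}} :=
  [fset C in F | v \notin cvar C]
  `|` [fset ((C `|` D) `\` [fset poslit v; neglit v]) | C in F, D in F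
         & (C `&` ccompl D == [fset poslit v])].

Definition singular (F : {fset {fset lit}}) (v : V) : Prop :=
  minn (ldeg F (poslit v)) (ldeg F (neglit v)) = 1.
Definition one_singular (F : {fset {fset lit}}) (v : V) : Prop :=
  ldeg F (poslit v) = 1 /\ ldeg F (neglit v) = 1.
Definition non1singular (F : {fset {fset lit}}) (v : V) : Prop :=
  singular F v /\ ~ one_singular F v.

Definition main_clause (F : {fset {fset lit}}) (v : V) (C : {fset lit}) : Prop :=
  C \in F /\ exists x : lit, [/\ lvar x = v, ldeg F x = 1 & x \in C].

End ClauseSets.

(* Main.v *)
Require Import Defs.
From HB Require Import structures.
From mathcomp Require Import all_boot.
From mathcomp Require Import finmap.
From mathcomp Require Import zify.
From Stdlib Require Import Classical.
Set Implicit Arguments. Unset Strict Implicit.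
Local Open Scope fset_scope.

Section Basic.
Variable V : choiceType.
Implicit Types (F : {fset {fset lit V}}) (v : V) (K G H : {fset lit V}) (z : lit V).

Lemma complK z : compl (compl z) = z.
Proof. by case: z => a b; rewrite /compl /= negbK. Qed.

Lemma compl_neq z : compl z != z.
Proof. by case: z => a b; rewrite /compl /= xpair_eqE eqxx /=; case: b. Qed.

Lemma in_ccompl K z : (z \in ccompl K) = (compl z \in K).
Proof.
apply/imfsetP/idP => [[y Hy ->]|H]; first by rewrite complK.
by exists (compl z) => //; rewrite complK.
Qed.

Lemma lit_cases z z' : z.1 = z'.1 -> z = z' \/ z = compl z'.
Proof.
case: z z' => a b [a' b'] /= ->; rewrite /compl /=.
by case: b; case: b'; auto.
Qed.

Lemma inP2 v z : (z \in [fset poslit v; neglit v]) = (z.1 == v).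
Proof.
case: z => a b; rewrite in_fset2 /poslit /neglit !xpair_eqE /=.
by case: b; case: (a == v).
Qed.

Lemma in_cvar v K : reflect (exists2 z, z \in K & z.1 = v) (v \in cvar K).
Proof.
apply: (iffP idP) => [/imfsetP [z Hz ->]|[z Hz <-]]; first by exists z.
by apply/imfsetP; exists z.
Qed.

Lemma satP phi K : reflect (exists2 z, z \in K & sat_lit phi z) (sat_clause phi K).
Proof.
apply: (iffP existsP) => [[k Hk]|[k kK Hk]]; first by exists (val k) => //; exact: fsvalP.
by exists [` kK].
Qed.

Lemma clause_compl K z : is_clause K -> z \in K -> compl z \notin K.
Proof. by move=> /forallP H Hz; exact: (H [` Hz]). Qed.

Lemma in_ldeg F z G : (G \in [fset G0 in F | z \in G0]) = (G \in F) && (z \in G).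
Proof. by rewrite !inE. Qed.

Lemma ldeg1_uniq F z G1 G2 : ldeg F z = 1 -> G1 \in F -> z \in G1 -> G2 \in F -> z \in G2 ->
  G1 = G2.
Proof.
rewrite /ldeg => /eqP /cardfs1P [K HK] H1 z1 H2 z2.
have : G1 \in [fset G0 in F | z \in G0] by rewrite in_ldeg H1 z1.
have : G2 \in [fset G0 in F | z \in G0] by rewrite in_ldeg H2 z2.
by rewrite HK !in_fset1 => /eqP -> /eqP ->.
Qed.

Lemma ldeg2_two F z : 1 < ldeg F z ->
  exists G1 G2, [/\ G1 \in F, z \in G1, G2 \in F, z \in G2 & G1 != G2].
Proof.
rewrite /ldeg; set S := [fset _ in _ | _] => HS.
have /fset0Pn [G1 HG1] : S != fset0 by rewrite -cardfs_gt0; lia.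
have /fset0Pn [G2 HG2] : S `\ G1 != fset0.
  rewrite -cardfs_gt0; move: HS; rewrite (cardfsD1 G1) HG1; lia.
move: HG2; rewrite in_fsetD1 => /andP [ne HG2].
move: HG1 HG2; rewrite !in_ldeg => /andP [a b] /andP [c d].
by exists G1, G2; split => //; rewrite eq_sym.
Qed.

Lemma two_ldeg2 F z G1 G2 : G1 \in F -> z \in G1 -> G2 \in F -> z \in G2 -> G1 != G2 ->
  1 < ldeg F z.
Proof.
move=> a b c d ne; rewrite /ldeg.
have : [fset G1; G2] `<=` [fset G0 in F | z \in G0].
  by apply/fsubsetP => K; rewrite in_fset2 => /orP [] /eqP ->; rewrite in_ldeg ?a ?b ?c ?d.
by move/fsubset_leq_card; rewrite cardfs2 ne.
Qed.

Lemma inDP v F R : R \in DP v F ->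
  (R \in F /\ v \notin cvar R) \/
  exists2 A, A \in F & exists2 B, B \in F /\ (A `&` ccompl B == [fset poslit v]) &
     R = (A `|` B) `\` [fset poslit v; neglit v].
Proof.
rewrite /DP in_fsetU => /orP [].
  rewrite !inE /=. move=> H. left. exact/andP.
move=> /imfset2P [A HA [B HB ->]]. right. exists A => //. exists B => //. exact/andP.
Qed.

Lemma DP_kept v F G : G \in F -> v \notin cvar G -> G \in DP v F.
Proof. by move=> a b; rewrite /DP in_fsetU; apply/orP; left; rewrite !inE a b. Qed.

Lemma DP_res v F A B : A \in F -> B \in F -> A `&` ccompl B == [fset poslit v] ->
  (A `|` B) `\` [fset poslit v; neglit v] \in DP v F.
Proof.
move=> a b c; rewrite /DP in_fsetU; apply/orP; right.
apply/imfset2P; exists A => //; exists B => //; exact/andP.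
Qed.

End Basic.

Section Main.
Variable V : choiceType.
Variables (F : {fset {fset lit V}}) (v : V) (C : {fset lit V}) (x : lit V).
Hypothesis Hcs : is_clause_set F.
Hypothesis Hunsat : ~ satisfiable F.
Hypothesis Hmin : forall G, G `<` F -> satisfiable G.
Hypothesis HC : C \in F.
Hypothesis Hx : x \in C.
Hypothesis Hxv : x.1 = v.
Hypothesis Hx1 : ldeg F x = 1.
Implicit Types (K G H : {fset lit V}) (z : lit V).

Lemma memE (a b : lit V) K : a = b -> a \in K -> b \in K.
Proof. by move=> ->. Qed.

Let P := [fset poslit v; neglit v].
Let R G := (C `|` G) `\` P.

Lemma onlyC G : G \in F -> x \in G -> G = C.
Proof. by move=> a b; apply: (ldeg1_uniq Hx1). Qed.

Lemma cxC : compl x \notin C.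
Proof. exact: clause_compl (Hcs HC) Hx. Qed.

Lemma remove1 G : G \in F -> exists phi,
  (forall H, H \in F -> H != G -> sat_clause phi H) /\ ~~ sat_clause phi G.
Proof.
move=> HG; have [phi Hphi] := Hmin (fproperD1 HG).
exists phi; split.
  by move=> H HF ne; apply: Hphi; rewrite in_fsetD1 ne HF.
apply/negP => sG; apply: Hunsat; exists phi => H HF.
case: (eqVneq H G) => [->|ne] //; apply: Hphi; by rewrite in_fsetD1 ne HF.
Qed.

Lemma exists_unsat phi : exists2 H, H \in F & ~~ sat_clause phi H.
Proof.
apply: NNPP => nex; apply: Hunsat; exists phi => H HF.
apply: NNPP => ns; apply: nex; exists H => //; exact/negP.
Qed.

Lemma clash G l : G \in F -> l \in G -> exists2 H, H \in F &
  compl l \in H /\ forall m, m \in H -> compl m \in G -> m = compl l.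
Proof.
move=> HG Hl; have [phi [Hphi nG]] := remove1 HG.
pose phi' u := if u == l.1 then l.2 else phi u.
have [H HF nH] := exists_unsat phi'.
have neHG : H != G.
  apply/eqP => E; move: nH; rewrite E => /negP; apply; apply/satP; exists l => //.
  by rewrite /sat_lit /phi' eqxx.
have /satP [h hH sh] := Hphi H HF neHG.
have hc : h = compl l.
  case: (eqVneq h.1 l.1) => e.
    case: (lit_cases e) => // hl; move: nH => /negP; case; apply/satP; exists h => //.
    by rewrite /sat_lit /phi' e eqxx hl.
  move: nH => /negP; case; apply/satP; exists h => //.
  by rewrite /sat_lit /phi' (negbTE e).
exists H => //; split; first by rewrite -hc.
move=> m mH cmG.
have cmf : ~~ sat_lit phi (compl m).
  apply/negP => sm; move/negP: nG; apply; apply/satP; by exists (compl m).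
have mf : ~~ sat_lit phi' m.
  apply/negP => sm; move/negP: nH; apply; apply/satP; by exists m.
case: (eqVneq m.1 l.1) => e.
  case: (lit_cases e) => ml; last exact: ml.
  by move: mf; rewrite ml /sat_lit /phi' eqxx /= eqxx.
move: mf cmf; rewrite /sat_lit /phi' (negbTE e) /compl /=.
by case: (phi m.1); case: m.2.
Qed.


Lemma x_cases : (x = poslit v /\ compl x = neglit v) \/ (x = neglit v /\ compl x = poslit v).
Proof.
case: x Hxv => a b /= ->; rewrite /poslit /neglit /compl /=.
by case: b; [left|right].
Qed.

Lemma cx1 : (compl x).1 = v. Proof. by []. Qed.

Lemma resDP G : G \in F -> compl x \in G -> R G \in DP v F.
Proof.
move=> HG Hcx; have [H HF [Hx' Hcl]] := clash HG Hcx.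
rewrite complK in Hx'; have eH := onlyC HF Hx'; subst H.
case: x_cases => [[ex ecx]|[ex ecx]].
  apply: DP_res HC HG _; apply/eqP/fsetP => m.
  rewrite in_fsetI in_ccompl in_fset1 -ex.
  apply/andP/eqP => [[a b]|->]; first by rewrite (Hcl _ a b) complK.
  by split.
rewrite /R fsetUC; apply: DP_res HG HC _; apply/eqP/fsetP => m.
rewrite in_fsetI in_ccompl in_fset1 -ecx.
apply/andP/eqP => [[a b]|->]; last by rewrite complK.
have := Hcl _ b; rewrite complK => /(_ a) e.
by rewrite -[m]complK e complK.
Qed.

Lemma notv H z : H \in F -> z \in H -> z != compl x -> H != C -> z.1 != v.
Proof.
move=> HF zH zc HnC; apply/eqP => zv.
have : z.1 = x.1 by rewrite zv Hxv.
case/lit_cases => e.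
  by move: HnC; rewrite (onlyC HF (memE e zH)) eqxx.
by move: zc; rewrite e eqxx.
Qed.

Lemma flip G H : G \in F -> compl x \in G -> H \in F -> H != G ->
  (forall z, z \in H -> z != compl x -> z \in R G) -> False.
Proof.
move=> HG cG HF neHG Hsub.
have [phi [Hphi nG]] := remove1 HG.
have cxf : ~~ sat_lit phi (compl x).
  apply/negP => s; move/negP: nG; apply; apply/satP; by exists (compl x).
have /satP [b bH sb] := Hphi H HF neHG.
have bne : b != compl x by apply/eqP => e; move: cxf; rewrite -e sb.
have := Hsub b bH bne; rewrite /R in_fsetD in_fsetU inP2 => /andP [bv /orP [bC|bG]]; last first.
  by move/negP: nG; case; apply/satP; exists b.
pose phi' u := if u == v then (compl x).2 else phi u.
apply: Hunsat; exists phi' => K HK.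
case: (boolP (compl x \in K)) => cK.
  by apply/satP; exists (compl x) => //; rewrite /sat_lit /phi' cx1 eqxx.
have neKG : K != G by apply/eqP => e; move: cK; rewrite e cG.
have /satP [k kK sk] := Hphi K HK neKG.
case: (eqVneq k.1 v) => kv.
  have : k.1 = x.1 by rewrite kv Hxv.
  case/lit_cases => e; last by move: cK; rewrite -e kK.
  have eK := onlyC HK (memE e kK); subst K.
  by apply/satP; exists b => //; rewrite /sat_lit /phi' (negbTE bv).
by apply/satP; exists k => //; rewrite /sat_lit /phi' (negbTE kv).
Qed.

Let img G := if compl x \in G then R G else G.

Lemma img_DP G : G \in F -> G != C -> img G \in DP v F.
Proof.
move=> HG nC; rewrite /img; case: ifP => c; first exact: resDP.
apply: DP_kept => //; apply/in_cvar => -[z zG zv].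
have : z.1 = x.1 by rewrite zv Hxv.
case/lit_cases => e; first by move: nC; rewrite (onlyC HG (memE e zG)) eqxx.
by move: c; rewrite -e zG.
Qed.

Lemma img_in1 G z : z.1 != v -> z \in G -> z \in img G.
Proof.
move=> zv zG; rewrite /img; case: ifP => _ //.
by rewrite /R in_fsetD in_fsetU inP2 (negbTE zv) zG orbT.
Qed.

Lemma img_in2 G z : z.1 != v -> compl x \in G -> z \in C -> z \in img G.
Proof.
move=> zv cG zC; rewrite /img cG.
by rewrite /R in_fsetD in_fsetU inP2 (negbTE zv) zC.
Qed.

Lemma img_inv G z : z \in img G -> z \in G \/ z \in C.
Proof.
rewrite /img; case: ifP => _; last by left.
by rewrite /R in_fsetD in_fsetU => /andP [_ /orP []]; auto.
Qed.

Lemma img_inj G1 G2 : G1 \in F -> G2 \in F -> G1 != C -> G2 != C -> G1 != G2 -> img G1 != img G2.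
Proof.
move=> H1 H2 n1 n2 ne; apply/negP => /eqP; rewrite /img.
case: ifP => c1; case: ifP => c2 E.
- apply: (flip H1 c1 H2 _) => [|z zG zc]; first by rewrite eq_sym.
  rewrite E /R in_fsetD in_fsetU inP2 (negbTE (notv H2 zG zc n2)) zG orbT //.
- apply: (flip H1 c1 H2 _) => [|z zG zc]; first by rewrite eq_sym.
  by rewrite E.
- apply: (flip H2 c2 H1 _) => [|z zG zc] //.
  by rewrite -E.
- by move: ne; rewrite E eqxx.
Qed.

Lemma img_surj K : K \in DP v F -> exists2 G, G \in F & G != C /\ K = img G.
Proof.
case/inDP => [[KF Kv]|[A HA [B [HB cond] ->]]].
  have cK : compl x \notin K.
    by apply/negP => c; move/negP: Kv; apply; apply/in_cvar; exists (compl x).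
  exists K => //; split; last by rewrite /img (negbTE cK).
  apply/eqP => e; move/negP: Kv; apply; apply/in_cvar; exists x => //; by rewrite e.
have : poslit v \in A `&` ccompl B by rewrite (eqP cond) in_fset1.
rewrite in_fsetI in_ccompl => /andP [pA nB].
case: x_cases => [[ex ecx]|[ex ecx]].
  have eA := onlyC HA (memE (esym ex) pA); subst A.
  have cB : compl x \in B by rewrite ecx; exact: nB.
  exists B => //; split.
    by apply/eqP => e; move: cxC; rewrite -e cB.
  by rewrite /img cB.
have nB' : x \in B by rewrite ex; exact: nB.
have eB := onlyC HB nB'; subst B.
have cA : compl x \in A by rewrite ecx.
exists A => //; split.
  by apply/eqP => e; move: cxC; rewrite -e cA.
by rewrite /img cA /R fsetUC.
Qed.

Lemma K1 G1 G2 z : G1 \in F -> G2 \in F -> G1 != C -> G2 != C -> G1 != G2 ->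
  z \in img G1 -> z \in img G2 -> 1 < ldeg (DP v F) z.
Proof.
move=> H1 H2 n1 n2 ne z1 z2.
exact: two_ldeg2 (img_DP H1 n1) z1 (img_DP H2 n2) z2 (img_inj H1 H2 n1 n2 ne).
Qed.

Lemma K3 z : z.1 != v -> z \in C -> 1 < ldeg F (compl x) -> 1 < ldeg (DP v F) z.
Proof.
move=> zv zC /ldeg2_two [E1 [E2 [a b c d ne]]].
have nC (E : {fset lit V}) : compl x \in E -> E != C by move=> cE; apply/eqP => e; move: cxC; rewrite -e cE.
exact: K1 a c (nC _ b) (nC _ d) ne (img_in2 zv b zC) (img_in2 zv d zC).
Qed.

Lemma K4 z : z.1 != v -> 1 < ldeg F (compl x) -> 1 < ldeg F z -> 1 < ldeg (DP v F) z.
Proof.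
move=> zv hx; case: (boolP (z \in C)) => zC; first by move=> _; exact: K3.
move/ldeg2_two => [G1 [G2 [a b c d ne]]].
have nC (E : {fset lit V}) : z \in E -> E != C by move=> cE; apply/eqP => e; move: zC; rewrite -e cE.
exact: K1 a c (nC _ b) (nC _ d) ne (img_in1 zv b) (img_in1 zv d).
Qed.

Lemma K2 D y : y.1 != v -> ldeg F y = 1 -> D \in F -> y \in D -> D != C ->
  ldeg (DP v F) y = 1.
Proof.
move=> yv y1 HD yD nDC; rewrite /ldeg; apply/eqP/cardfs1P; exists (img D).
apply/fsetP => K; rewrite in_ldeg in_fset1; apply/andP/eqP => [[KD yK]| ->].
  have [G HG [nG eK]] := img_surj KD.
  move: yK; rewrite eK => /img_inv [yG|yC].
    by rewrite (ldeg1_uniq y1 HG yG HD yD).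
  by move: nDC; rewrite (ldeg1_uniq y1 HD yD HC yC) eqxx.
by split; [exact: img_DP | exact: img_in1].
Qed.

Lemma side D y : 1 < ldeg F (compl x) -> y.1 != v -> ldeg F y = 1 -> D \in F -> y \in D ->
  1 < ldeg F (compl y) ->
  [/\ C = D -> 1 < ldeg (DP v F) y, C <> D -> ldeg (DP v F) y = 1
     & 1 < ldeg (DP v F) (compl y)].
Proof.
move=> hx yv y1 HD yD hy; split.
- by move=> e; apply: K3 => //; rewrite e.
- by move=> ne; apply: (K2 yv y1 HD yD); apply/eqP => e; apply: ne.
- by apply: K4.
Qed.

End Main.

Lemma dec V (F : {fset {fset lit V}}) v (x : lit V) :
  non1singular F v -> x.1 = v -> ldeg F x = 1 -> 1 < ldeg F (compl x).
Proof.
move=> H; case: x => a b /= ev; subst v; move: H.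
rewrite /non1singular /singular /one_singular /compl /poslit /neglit /=.
by case: b => /= [[h1 h2] e | [h1 h2] e]; rewrite e in h1 h2 *; lia.
Qed.

Lemma enc_sing V (F : {fset {fset lit V}}) w (y : lit V) :
  y.1 = w -> 1 < ldeg F y -> 1 < ldeg F (compl y) -> ~ singular F w.
Proof.
case: y => a b /= <-; rewrite /singular /compl /poslit /neglit /=.
by case: b => /= h1 h2; lia.
Qed.

Lemma enc_n1 V (F : {fset {fset lit V}}) w (y : lit V) :
  y.1 = w -> ldeg F y = 1 -> 1 < ldeg F (compl y) -> non1singular F w.
Proof.
case: y => a b /= <-; rewrite /non1singular /singular /one_singular /compl /poslit /neglit /=.
by case: b => /= h1 h2; split; lia.
Qed.

Unset Implicit Arguments.
Local Close Scope fset_scope.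

Theorem lemma37 (V : choiceType) (F : {fset {fset lit V}}) (v w : V)
    (C D : {fset lit V}) :
  is_clause_set F -> MU F -> v <> w ->
  non1singular F v -> non1singular F w ->
  main_clause F v C -> main_clause F w D ->
  (C = D -> ~ singular (DP v F) w /\ ~ singular (DP w F) v) /\
  (C <> D -> non1singular (DP v F) w /\ non1singular (DP w F) v).
Proof.
move=> Hcs [Hunsat Hmin] nvw nv nw [HC [x [xv x1 xC]]] [HD [y [yv y1 yD]]].
have hx := dec nv xv x1; have hy := dec nw yv y1.
have yv' : y.1 != v by apply/eqP => e; apply: nvw; rewrite -e.
have xv' : x.1 != w by apply/eqP => e; apply: nvw; rewrite -e.
have [S1a S1b S1c] := side Hcs Hunsat Hmin HC xC xv x1 hx yv' y1 HD yD hy.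
have [S2a S2b S2c] := side Hcs Hunsat Hmin HD yD yv y1 hy xv' x1 HC xC hx.
split => e; split.
- exact: enc_sing yv (S1a e) S1c.
- exact: enc_sing xv (S2a (esym e)) S2c.
- exact: enc_n1 yv (S1b e) S1c.
- by apply: enc_n1 xv (S2b _) S2c => e'; apply: e.
Qed.
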